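(* Every finitely generated multi-ended group is extraterrestrial.
   Context: A finitely generated group $\Gamma$ is multi-ended if for some finite symmetric generating set $S$ there is a finite set $F\subset\Gamma$ such that removing $F$ from the Cayley graph $\mathrm{Cay}(\Gamma,S)$ leaves at least two infinite connected components. A finitely generated group is extraterrestrial if its Cayley graph with respect to some (equivalently any) finite symmetric generating set is extraterrestrial, where a graph $G=(V,E)$ is extraterrestrial if for every $m$ there is $k$ such that for every $r$ there is an $(m,k,r)$-UFO: pairwise disjoint finite $U,F,O\subseteq V$ with $U\neq\emptyset$, $|U|\ge m|F|$, a bijection $\mu:U\to O$ with $d_G(u,\mu(u))\le k$, and every path from $U$ to $O$ either contains a vertex of $F$ or has length at least $r$. *)

(* Defs.v *)
From Stdlib Require Import List Arith.
Import ListNotations.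

Record Group := {
  carrier :> Type;
  gmul : carrier -> carrier -> carrier;
  gone : carrier;
  ginv : carrier -> carrier;
  gmul_assoc : forall x y z, gmul x (gmul y z) = gmul (gmul x y) z;
  gmul_1l : forall x, gmul gone x = x;
  gmul_Vl : forall x, gmul (ginv x) x = gone
}.

(** [walk adj x p]: x = p_0, p_1, ..., p_n (with p = [p_1;...;p_n]) is a
    walk, i.e. consecutive vertices are adjacent. Its length is [length p]
    and it ends at [last p x]. *)
Fixpoint walk {V : Type} (adj : V -> V -> Prop) (x : V) (p : list V) : Prop :=
  match p with
  | [] => True
  | y :: q => adj x y /\ walk adj y q
  end.

Definition dist_le {V : Type} (adj : V -> V -> Prop) (u v : V) (k : nat) : Prop :=
  exists p, walk adj u p /\ last p u = v /\ length p <= k.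

Definition is_UFO {V : Type} (adj : V -> V -> Prop) (m k r : nat)
    (U F O : list V) (mu : V -> V) : Prop :=
  NoDup U /\ NoDup F /\ NoDup O /\
  (forall v, In v U -> ~ In v F) /\
  (forall v, In v U -> ~ In v O) /\
  (forall v, In v F -> ~ In v O) /\
  U <> [] /\
  m * length F <= length U /\
  (forall u, In u U -> In (mu u) O) /\
  (forall u1 u2, In u1 U -> In u2 U -> mu u1 = mu u2 -> u1 = u2) /\
  (forall o, In o O -> exists u, In u U /\ mu u = o) /\
  (forall u, In u U -> dist_le adj u (mu u) k) /\
  (forall u p, In u U -> walk adj u p -> In (last p u) O ->
     (exists v, In v (u :: p) /\ In v F) \/ r <= length p).

Definition extraterrestrial_graph {V : Type} (adj : V -> V -> Prop) : Prop :=
  forall m : nat, exists k : nat, forall r : nat,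
    exists (U F O : list V) (mu : V -> V), is_UFO adj m k r U F O mu.

Definition symmetric_set (G : Group) (S : list G) : Prop :=
  forall s, In s S -> In (ginv G s) S.

Definition prod_list (G : Group) (l : list G) : G :=
  fold_right (gmul G) (gone G) l.

(** S generates G (as a monoid; for symmetric S this equals group generation) *)
Definition generates (G : Group) (S : list G) : Prop :=
  forall g : G, exists l : list G, (forall s, In s l -> In s S) /\ g = prod_list G l.

Definition fin_sym_gen_set (G : Group) (S : list G) : Prop :=
  symmetric_set G S /\ generates G S.

Definition finitely_generated (G : Group) : Prop :=
  exists S : list G, fin_sym_gen_set G S.

Definition cayley_adj (G : Group) (S : list G) (g h : G) : Prop :=
  exists s, In s S /\ h = gmul G g s.

Definition conn_avoid {V : Type} (adj : V -> V -> Prop) (F : list V) (x y : V) : Prop :=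
  exists p, walk adj x p /\ last p x = y /\ (forall v, In v (x :: p) -> ~ In v F).

Definition infinite_component {V : Type} (adj : V -> V -> Prop) (F : list V) (x : V) : Prop :=
  ~ In x F /\ ~ exists l : list V, forall y, conn_avoid adj F x y -> In y l.

Definition at_least_two_infinite_components {V : Type} (adj : V -> V -> Prop) (F : list V) : Prop :=
  exists x y, infinite_component adj F x /\ infinite_component adj F y /\
              ~ conn_avoid adj F x y.

Definition multi_ended (G : Group) : Prop :=
  exists S : list G, fin_sym_gen_set G S /\
    exists F : list G, at_least_two_infinite_components (cayley_adj G S) F.

Definition extraterrestrial_group (G : Group) : Prop :=
  exists S : list G, fin_sym_gen_set G S /\ extraterrestrial_graph (cayley_adj G S).

(* Main.v *)
Require Import Defs.
From Stdlib Require Import List Arith Lia Relations Classical ClassicalEpsilon.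
Import ListNotations.

Section Gen.
Variable V : Type.
Variable adj : V -> V -> Prop.
Variable F : list V.

Definition Rr (a b : V) : Prop := adj a b /\ ~ In a F /\ ~ In b F.

Lemma last_cons' (a x : V) p : last (a :: p) x = last p a.
Proof. revert a x. induction p as [|b p IH]; intros a x; [reflexivity|].
  change (last (b :: p) x = last (b :: p) a). rewrite !IH. reflexivity. Qed.

Lemma walk_rt : forall p x, walk adj x p -> (forall v, In v (x :: p) -> ~ In v F) ->
  clos_refl_trans V Rr x (last p x).
Proof.
  induction p as [|a p IH]; intros x Hw Hv; simpl in Hw.
  - apply rt_refl.
  - destruct Hw as [Ha Hw]. rewrite last_cons'.
    apply rt_trans with a.
    + apply rt_step. split; [exact Ha|split]; apply Hv; simpl; auto.
    + apply IH; auto. intros v Hin. apply Hv. simpl in *. destruct Hin; auto.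
Qed.

Lemma conn_rt x y : conn_avoid adj F x y -> ~ In x F /\ clos_refl_trans V Rr x y.
Proof.
  intros [p [Hw [Hl Hv]]]. split. apply Hv; simpl; auto.
  rewrite <- Hl. apply walk_rt; auto.
Qed.

Lemma rt_conn x y : ~ In x F -> clos_refl_trans V Rr x y -> conn_avoid adj F x y.
Proof.
  intros Hx H. apply clos_rt_rt1n in H. induction H as [x|x y z Hr H IH].
  - exists []. simpl. split; auto. split; auto. intros v [<-|[]]; auto.
  - destruct Hr as [Ha [Hx' Hy']]. destruct (IH Hy') as [p [Hw [Hl Hv]]].
    exists (y :: p). split; [simpl; auto|]. split.
    + rewrite last_cons'. exact Hl.
    + intros v Hin. destruct Hin as [<-|Hin]; auto.
Qed.

Lemma rt_sym : (forall a b, adj a b -> adj b a) ->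
  forall a b, clos_refl_trans V Rr a b -> clos_refl_trans V Rr b a.
Proof.
  intros Hs a b H. induction H.
  - apply rt_step. destruct H as [H1 [H2 H3]]. split; auto.
  - apply rt_refl.
  - eapply rt_trans; eauto.
Qed.

Lemma inf_list (P : V -> Prop) : ~ (exists l, forall y, P y -> In y l) ->
  forall n, exists l, NoDup l /\ length l = n /\ forall y, In y l -> P y.
Proof.
  intros H n. induction n as [|n IH].
  - exists []. repeat split; [constructor | intros y []].
  - destruct IH as [l [Hnd [Hlen Hp]]].
    assert (exists y, P y /\ ~ In y l) as [y [Py Hy]].
    { apply NNPP; intro Hn; apply H; exists l; intros y Py.
      apply NNPP; intro; apply Hn; eauto. }
    exists (y :: l). split; [constructor; auto|]. split; [simpl; auto|].
    intros z [<-|Hz]; auto.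
Qed.

Lemma nodup_ex (L : list V) : exists L', NoDup L' /\ length L' <= length L /\
  forall v, In v L' <-> In v L.
Proof.
  induction L as [|a L IH].
  - exists []. repeat split; auto. constructor.
  - destruct IH as [L' [Hn [Hl Hi]]]. destruct (classic (In a L')).
    + exists L'. split; auto. split; simpl; [lia|].
      intro v; rewrite Hi. simpl. split; auto. intros [<-|]; auto. apply Hi; auto.
    + exists (a :: L'). split; [constructor; auto|]. split; simpl; [lia|].
      intro v. rewrite Hi. tauto.
Qed.

Lemma dist_mono a b k k' : dist_le adj a b k -> k <= k' -> dist_le adj a b k'.
Proof. intros [p [H1 [H2 H3]]] Hk. exists p. repeat split; auto. lia. Qed.

Lemma mu_ex : (forall a b, exists d, dist_le adj a b d) ->
  forall U O, length U = length O -> NoDup U -> NoDup O ->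
  exists (mu : V -> V) k,
    (forall u, In u U -> In (mu u) O) /\
    (forall u1 u2, In u1 U -> In u2 U -> mu u1 = mu u2 -> u1 = u2) /\
    (forall o, In o O -> exists u, In u U /\ mu u = o) /\
    (forall u, In u U -> dist_le adj u (mu u) k).
Proof.
  intros Hc U. induction U as [|u U IH]; intros O Hl HU HO.
  - exists (fun z => z), 0. destruct O; [|discriminate].
    repeat split; simpl; intros; try contradiction.
  - destruct O as [|o O]; [discriminate|]. simpl in Hl.
    inversion HU as [|u0 U0 H3 H2 Eq]; subst. inversion HO as [|o0 O0 H5 H4 Eq']; subst.
    destruct (IH O ltac:(lia) H2 H4) as [mu' [k' [A [B [C D]]]]].
    destruct (Hc u o) as [d Hd].
    exists (fun z => if excluded_middle_informative (z = u) then o else mu' z), (max k' d).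
    split; [|split; [|split]].
    + intros z Hz. destruct (excluded_middle_informative (z = u)); [left; auto|].
      right. destruct Hz; [congruence|auto].
    + intros z1 z2 Z1 Z2.
      destruct (excluded_middle_informative (z1 = u)), (excluded_middle_informative (z2 = u));
        intro E; try congruence.
      * exfalso. destruct Z2 as [|Z2]; [congruence|]. apply H5. rewrite E. auto.
      * exfalso. destruct Z1 as [|Z1]; [congruence|]. apply H5. rewrite <- E. auto.
      * destruct Z1 as [|Z1]; [congruence|]. destruct Z2 as [|Z2]; [congruence|]. auto.
    + intros o' [<-|Ho'].
      * exists u. split; [left; auto|]. destruct (excluded_middle_informative (u = u)); congruence.
      * destruct (C o' Ho') as [u' [Hu' E]]. exists u'. split; [right; auto|].
        destruct (excluded_middle_informative (u' = u)); [subst; contradiction|auto].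
    + intros z Hz. destruct (excluded_middle_informative (z = u)).
      * subst. eapply dist_mono; eauto. lia.
      * destruct Hz as [|Hz]; [congruence|]. eapply dist_mono; eauto. lia.
Qed.

End Gen.

Lemma gmul_Vr (G : Group) (x : G) : gmul G x (ginv G x) = gone G.
Proof.
  assert (Haa : gmul G (gmul G x (ginv G x)) (gmul G x (ginv G x)) = gmul G x (ginv G x)).
  { rewrite <- gmul_assoc. rewrite (gmul_assoc G (ginv G x) x (ginv G x)).
    rewrite gmul_Vl, gmul_1l. reflexivity. }
  transitivity (gmul G (gmul G (ginv G (gmul G x (ginv G x))) (gmul G x (ginv G x))) (gmul G x (ginv G x))).
  - rewrite gmul_Vl, gmul_1l; reflexivity.
  - rewrite <- gmul_assoc, Haa. apply gmul_Vl.
Qed.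

Lemma gmul_1r (G : Group) (x : G) : gmul G x (gone G) = x.
Proof. rewrite <- (gmul_Vl G x). rewrite gmul_assoc, gmul_Vr, gmul_1l. reflexivity. Qed.

Fixpoint path_of (G : Group) (a : G) (l : list G) : list G :=
  match l with [] => [] | s :: l' => gmul G a s :: path_of G (gmul G a s) l' end.

Lemma path_of_ok (G : Group) (S : list G) : forall l a, (forall s, In s l -> In s S) ->
  walk (cayley_adj G S) a (path_of G a l) /\ last (path_of G a l) a = gmul G a (prod_list G l)
  /\ length (path_of G a l) = length l.
Proof.
  induction l as [|s l IH]; intros a Hl.
  - simpl. rewrite gmul_1r. auto.
  - destruct (IH (gmul G a s)) as [A [B C]]. { intros; apply Hl; simpl; auto. }
    split; [simpl; split; auto; exists s; split; auto; apply Hl; simpl; auto|].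
    split; [|simpl; auto]. cbn [path_of]. rewrite last_cons'. rewrite B. symmetry. apply gmul_assoc.
Qed.

Theorem mainTheorem6 (G : Group) :
  finitely_generated G -> multi_ended G -> extraterrestrial_group G.
Proof.
  intros _ [S [[Hsym Hgen] [F [x [y [Hx [Hy Hxy]]]]]]].
  exists S. split; [split; auto|].
  set (adj := cayley_adj G S).
  assert (Hs : forall a b, adj a b -> adj b a).
  { intros a b [s [Hs E]]. exists (ginv G s). split; [apply Hsym; auto|].
    subst. rewrite <- gmul_assoc, gmul_Vr, gmul_1r. reflexivity. }
  assert (Hc : forall a b, exists d, dist_le adj a b d).
  { intros a b. destruct (Hgen (gmul G (ginv G a) b)) as [l [Hl E]].
    destruct (path_of_ok G S l a Hl) as [A [B C]].
    exists (length l). exists (path_of G a l). split; auto. split; [|lia].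
    rewrite B, <- E, gmul_assoc, gmul_Vr, gmul_1l. reflexivity. }
  destruct (nodup_ex G adj F) as [F' [HF' [HlF HiF]]].
  intro m.
  destruct (inf_list G _ (proj2 Hx) (Datatypes.S (m * length F))) as [U [HU [HlU HpU]]].
  destruct (inf_list G _ (proj2 Hy) (Datatypes.S (m * length F))) as [O [HO [HlO HpO]]].
  destruct (mu_ex G adj Hc U O ltac:(congruence) HU HO) as [mu [k [A [B [C D]]]]].
  exists k. intro r. exists U, F', O, mu.
  assert (HxU : forall u, In u U -> ~ In u F /\ clos_refl_trans G (Rr G adj F) x u).
  { intros u Hu. destruct (conn_rt G adj F x u (HpU u Hu)) as [H1 H2]. split; auto.
    destruct (HpU u Hu) as [p [_ [Hl Hv]]]. apply Hv. rewrite <- Hl.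
    destruct p as [|a p]; [left; auto|]. right. rewrite last_cons'.
    clear. revert a. induction p; intro b; [left; auto|]. rewrite last_cons'. right; auto. }
  assert (HyO : forall u, In u O -> ~ In u F /\ clos_refl_trans G (Rr G adj F) y u).
  { intros u Hu. destruct (conn_rt G adj F y u (HpO u Hu)) as [H1 H2]. split; auto.
    destruct (HpO u Hu) as [p [_ [Hl Hv]]]. apply Hv. rewrite <- Hl.
    destruct p as [|a p]; [left; auto|]. right. rewrite last_cons'.
    clear. revert a. induction p; intro b; [left; auto|]. rewrite last_cons'. right; auto. }
  assert (Hxy' : forall u o, clos_refl_trans G (Rr G adj F) x u ->
                   clos_refl_trans G (Rr G adj F) y o ->
                   clos_refl_trans G (Rr G adj F) u o -> False).
  { intros u o H1 H2 H3. apply Hxy. apply rt_conn; [apply Hx|].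
    eapply rt_trans; [eapply rt_trans; [exact H1|exact H3]|].
    apply rt_sym; auto. }
  unfold is_UFO.
  split; [auto|]. split; [auto|]. split; [auto|].
  split. { intros v Hv Hf. apply (proj1 (HxU v Hv)), HiF; auto. }
  split. { intros v Hv Ho. apply (Hxy' v v (proj2 (HxU v Hv)) (proj2 (HyO v Ho))). apply rt_refl. }
  split. { intros v Hf Ho. apply (proj1 (HyO v Ho)), HiF; auto. }
  split. { destruct U; [discriminate|discriminate]. }
  split. { rewrite HlU. pose proof (Nat.mul_le_mono_l _ _ m HlF). lia. }
  split; [auto|]. split; [auto|]. split; [auto|]. split; [auto|].
  intros u p Hu Hw Ho. left. apply NNPP; intro Hno.
  assert (Hv : forall v, In v (u :: p) -> ~ In v F).
  { intros v Hv Hf. apply Hno. exists v. split; auto. apply HiF; auto. }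
  apply (Hxy' u (last p u) (proj2 (HxU u Hu)) (proj2 (HyO _ Ho))).
  apply walk_rt; auto.
Qed.
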